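(* Let $n\ge1$, $\beta\in\mathbb C\setminus\{0\}$. (i) The assignment $\tilde T_{ij}(u)\mapsto\delta_{ij}+E_{ij}\,\frac{1}{u+\beta/u}$ (with $\frac1{u+\beta/u}$ expanded in powers of $u^{-1}$, and the map defined by comparing coefficients of $u^{-r}$) defines a surjective algebra homomorphism $OY_\beta(\mathfrak{gl}_n)\to U(\mathfrak{gl}_n)$, and the assignment $E_{ij}\mapsto\tilde t^{(1)}_{ij}$ defines an embedding $U(\mathfrak{gl}_n)\to OY_\beta(\mathfrak{gl}_n)$. (ii) The assignment $\tilde T_{ij}(u)\mapsto T_{ij}(u+\beta/u)$ defines a homomorphism $OY_\beta(\mathfrak{gl}_n)[u^{-1}]\to Y(\mathfrak{gl}_n)[u^{-1}]$. (iii) For any $f(u)=1+\sum_{k\ge1}f_ku^{-k}\in\mathbb C[[u^{-1}]]$ and any invertible $B\in GL_n(\mathbb C)$, the maps (a) $\tilde T(u)\mapsto f(u)\tilde T(u)$ and (b) $\tilde T(u)\mapsto B\tilde T(u)B^{-1}$ define automorphisms of $OY_\beta(\mathfrak{gl}_n)$.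
   Context: $OY_\beta(\mathfrak{gl}_n)$ is the unital associative $\mathbb C$-algebra with generators $\tilde t^{(r)}_{ij}$ ($1\le i,j\le n$, $r\ge1$) subject to the relations $\left(u+\frac\beta u-v-\frac\beta v\right)[\tilde T_{ij}(u),\tilde T_{kl}(v)]=\tilde T_{kj}(u)\tilde T_{il}(v)-\tilde T_{kj}(v)\tilde T_{il}(u)$ for all $i,j,k,l$, where $\tilde T_{ij}(u)=\delta_{ij}+\sum_{r\ge1}\tilde t^{(r)}_{ij}u^{-r}$ and $\tilde T(u)=(\tilde T_{ij}(u))_{i,j}$ (equivalently, $[\tilde t^{(r+1)}_{ij}+\beta\tilde t^{(r-1)}_{ij},\tilde t^{(s)}_{kl}]-[\tilde t^{(r)}_{ij},\tilde t^{(s+1)}_{kl}+\beta\tilde t^{(s-1)}_{kl}]=\tilde t^{(r)}_{kj}\tilde t^{(s)}_{il}-\tilde t^{(s)}_{kj}\tilde t^{(r)}_{il}$ for $r,s\ge0$ with $\tilde t^{(0)}_{ij}=\delta_{ij}$, $\tilde t^{(-1)}_{ij}=0$). $E_{ij}$ are the standard matrix units spanning $\mathfrak{gl}_n$. $Y(\mathfrak{gl}_n)$ is the Yangian with generators $t^{(r)}_{ij}$ and relations $[t^{(r+1)}_{ij},t^{(s)}_{kl}]-[t^{(r)}_{ij},t^{(s+1)}_{kl}]=t^{(r)}_{kj}t^{(s)}_{il}-t^{(s)}_{kj}t^{(r)}_{il}$ ($r,s\ge0$, $t^{(0)}_{ij}=\delta_{ij}$), and $T_{ij}(w)=\sum_{r\ge0}t^{(r)}_{ij}w^{-r}$;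 $T_{ij}(u+\beta/u)$ is expanded in powers of $u^{-1}$. *)

(* Defs.v *)
From mathcomp Require Import all_boot all_algebra.
From mathcomp Require Import complex.
From mathcomp Require Import Rstruct.
Set Implicit Arguments. Unset Strict Implicit. Unset Printing Implicit Defensive.
Import GRing.Theory.
Local Open Scope ring_scope.

Definition CC : Type := complex Rdefinitions.R.

Definition comm (A : algType CC) (a b : A) : A := a * b - b * a.

(* [presents rel A g]: the algebra A together with the family of generators
   g : G -> A is THE algebra presented by generators G and relations [rel]:
   the generators satisfy the relations, and for every algebra B and every
   family h : G -> B satisfying the relations there is a unique algebra
   homomorphism A -> B sending g x to h x (universal property). *)
Definition presents (G : Type) (rel : forall B : algType CC, (G -> B) -> Prop)
  (A : algType CC) (g : G -> A) : Prop :=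
  rel A g /\
  forall (B : algType CC) (h : G -> B), rel B h ->
    exists f : {lrmorphism A -> B},
      (forall x, f (g x) = h x) /\
      (forall f' : {lrmorphism A -> B}, (forall x, f' (g x) = h x) -> f' =1 f).

(* Generators of OY / Y: the generator t (i, j, r) stands for t^{(r+1)}_{ij}
   (r : nat, so that r+1 >= 1 ranges over all positive superscripts). *)
Definition gen_t (n : nat) := ('I_n * 'I_n * nat)%type.

(* [ext t i j m] = t^{(m)}_{ij} with the convention t^{(0)}_{ij} = delta_ij. *)
Definition ext n (A : algType CC) (t : gen_t n -> A) (i j : 'I_n) (m : nat) : A :=
  if m is m'.+1 then t (i, j, m') else (i == j)%:R.

(* [extm1 t i j m] = t^{(m-1)}_{ij} with t^{(-1)} = 0. *)
Definition extm1 n (A : algType CC) (t : gen_t n -> A) (i j : 'I_n) (m : nat) : A :=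
  if m is m'.+1 then ext t i j m' else 0.

Definition OY_rel n (beta : CC) (A : algType CC) (t : gen_t n -> A) : Prop :=
  forall (i j k l : 'I_n) (r s : nat),
    comm (ext t i j r.+1 + beta *: extm1 t i j r) (ext t k l s)
    - comm (ext t i j r) (ext t k l s.+1 + beta *: extm1 t k l s)
    = ext t k j r * ext t i l s - ext t k j s * ext t i l r.

Definition Y_rel n (A : algType CC) (t : gen_t n -> A) : Prop :=
  forall (i j k l : 'I_n) (r s : nat),
    comm (ext t i j r.+1) (ext t k l s) - comm (ext t i j r) (ext t k l s.+1)
    = ext t k j r * ext t i l s - ext t k j s * ext t i l r.

Definition U_rel n (A : algType CC) (E : 'I_n * 'I_n -> A) : Prop :=
  forall i j k l : 'I_n,
    comm (E (i, j)) (E (k, l)) = (k == j)%:R * E (i, l) - (i == l)%:R * E (k, j).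

Definition is_OY n (beta : CC) (A : algType CC) (t : gen_t n -> A) : Prop :=
  presents (@OY_rel n beta) t.
Definition is_Yangian n (A : algType CC) (t : gen_t n -> A) : Prop :=
  presents (@Y_rel n) t.
Definition is_Ugl n (A : algType CC) (E : 'I_n * 'I_n -> A) : Prop :=
  presents (@U_rel n) E.

(* Coefficient of u^{-m} in 1/(u + beta/u) = sum_k (-beta)^k u^{-2k-1}. *)
Definition inv_coef (beta : CC) (m : nat) : CC :=
  if odd m then (- beta) ^+ m./2 else 0.

(* Coefficient of u^{-m} in T_ij(u + beta/u) = sum_r t^{(r)}_ij (u+beta/u)^{-r},
   using (u + beta/u)^{-r} = sum_k (-1)^k binom(r+k-1,k) beta^k u^{-r-2k}
   (for r = 0 this gives the constant 1, as binom(k-1,k) = 0 for k >= 1). *)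
Definition Yexp n (beta : CC) (A : algType CC) (t : gen_t n -> A)
  (i j : 'I_n) (m : nat) : A :=
  \sum_(k < m.+1) \sum_(r < m.+1 | (r + k.*2 == m)%N)
     ((-1) ^+ k * ('C(r + k - 1, k))%:R * beta ^+ k) *: ext t i j r.

(* Coefficient of u^{-m} in f(u) T_ij(u), f(u) = sum_k f_k u^{-k} (f_0 = 1). *)
Definition fmul n (A : algType CC) (t : gen_t n -> A) (f : nat -> CC)
  (i j : 'I_n) (m : nat) : A :=
  \sum_(k < m.+1) f k *: ext t i j (m - k).

Definition conjT n (A : algType CC) (t : gen_t n -> A) (B : 'M[CC]_n)
  (i j : 'I_n) (m : nat) : A :=
  \sum_(a < n) \sum_(b < n) (B i a * invmx B b j) *: ext t a b m.

(* Main.v *)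
Require Import Defs.
From mathcomp Require Import all_boot all_algebra.
From mathcomp Require Import complex Rstruct.
From mathcomp Require Import zify ring.
From Stdlib Require Import FunctionalExtensionality.
Import GRing.Theory.
Local Open Scope ring_scope.
Set Implicit Arguments. Unset Strict Implicit.

Section Gen.
Variable A : algType CC.

Lemma mul_bil N M (a b : nat -> CC) (X Y : nat -> A) :
  (\sum_(0 <= p < N) a p *: X p) * (\sum_(0 <= q < M) b q *: Y q)
  = \sum_(0 <= p < N) \sum_(0 <= q < M) (a p * b q) *: (X p * Y q).
Proof.
rewrite mulr_suml; apply: eq_bigr => p _.
rewrite mulr_sumr; apply: eq_bigr => q _.
by rewrite -scalerAl -scalerAr scalerA.
Qed.

Lemma comm_bil N (a b : nat -> CC) (X Y : nat -> A) :
  comm (\sum_(0 <= p < N) a p *: X p) (\sum_(0 <= q < N) b q *: Y q)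
  = \sum_(0 <= p < N) \sum_(0 <= q < N) (a p * b q) *: comm (X p) (Y q).
Proof.
rewrite /comm !mul_bil [X in _ - X]exchange_big -sumrB; apply: eq_bigr => p _.
rewrite -sumrB; apply: eq_bigr => q _.
by rewrite scalerBr mulrC.
Qed.

Lemma comm_suml N (a : nat -> CC) (X : nat -> A) Y :
  comm (\sum_(0 <= p < N) a p *: X p) Y = \sum_(0 <= p < N) a p *: comm (X p) Y.
Proof.
rewrite /comm mulr_suml mulr_sumr -sumrB; apply: eq_bigr => p _.
by rewrite scalerBr -scalerAl -scalerAr.
Qed.

Lemma comm_sumr N (a : nat -> CC) (X : nat -> A) Y :
  comm Y (\sum_(0 <= p < N) a p *: X p) = \sum_(0 <= p < N) a p *: comm Y (X p).
Proof.
rewrite /comm mulr_suml mulr_sumr -sumrB; apply: eq_bigr => p _.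
by rewrite scalerBr -scalerAl -scalerAr.
Qed.

Lemma commDl x y z : comm (x + y) z = comm x z + comm y z :> A.
Proof. by rewrite /comm mulrDl mulrDr; rewrite addrACA opprD. Qed.
Lemma commDr x y z : comm z (x + y) = comm z x + comm z y :> A.
Proof. by rewrite /comm mulrDl mulrDr; rewrite addrACA opprD. Qed.
Lemma commZl c x z : comm (c *: x) z = c *: comm x z :> A.
Proof. by rewrite /comm scalerBr -scalerAl -scalerAr. Qed.
Lemma commZr c x z : comm z (c *: x) = c *: comm z x :> A.
Proof. by rewrite /comm scalerBr -scalerAl -scalerAr. Qed.
Lemma comm0l z : comm 0 z = 0 :> A.
Proof. by rewrite /comm mul0r mulr0 subrr. Qed.
Lemma comm0r z : comm z 0 = 0 :> A.
Proof. by rewrite /comm mul0r mulr0 subrr. Qed.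
Lemma comm_natl (m : nat) z : comm m%:R z = 0 :> A.
Proof. by rewrite /comm mulr_natl mulr_natr subrr. Qed.
Lemma comm_natr (m : nat) z : comm z m%:R = 0 :> A.
Proof. by rewrite /comm mulr_natl mulr_natr subrr. Qed.

Lemma sum_widen (F : nat -> A) a b : (a <= b)%N -> (forall p, (a <= p)%N -> F p = 0) ->
  \sum_(0 <= p < b) F p = \sum_(0 <= p < a) F p.
Proof.
move=> hab hF; rewrite (big_cat_nat (leq0n a) hab) /= [X in _ + X]big1_seq ?addr0 //.
by move=> p /andP[_]; rewrite mem_index_iota => /andP[/hF].
Qed.

End Gen.

Set Implicit Arguments. Unset Strict Implicit.

Definition shm (A : algType CC) n (T : 'I_n -> 'I_n -> nat -> A) i j r : A :=
  if r is r'.+1 then T i j r' else 0.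
Definition Rel n (b : CC) (A : algType CC) (T : 'I_n -> 'I_n -> nat -> A) :=
  forall i j k l r s, comm (T i j r.+1 + b *: shm T i j r) (T k l s)
    - comm (T i j r) (T k l s.+1 + b *: shm T k l s) = T k j r * T i l s - T k j s * T i l r.
Definition Km (K : nat -> nat -> CC) p m : CC := if m is m'.+1 then K p m' else 0.

Lemma OY_Rel n b (A : algType CC) (t : gen_t n -> A) : OY_rel b t <-> Rel b (ext t).
Proof. by []. Qed.

Section Ker.
Variable A : algType CC.
Variables (K : nat -> nat -> CC) (bs bt : CC).
Hypothesis K0 : forall p m, (m < p)%N -> K p m = 0.
Hypothesis Ksh : forall p m, K p.+1 m.+1 + bt * Km K p.+1 m = K p m + bs * K p.+2 m.

Lemma shift_sum N r (Z Zm : nat -> A) :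
 (r.+2 < N)%N -> Z 0 = 0 -> Zm 0 = 0 -> (forall p, Zm p.+1 = Z p) ->
 \sum_(0 <= p < N) (K p r.+1 + bt * Km K p r) *: Z p
   = \sum_(0 <= p < N) K p r *: (Z p.+1 + bs *: Zm p).
Proof.
case: N => [|[|N]] // hN Z0 Zm0 ZmS.
rewrite big_nat_recl // Z0 scaler0 add0r.
under eq_bigr do rewrite Ksh scalerDl -scalerA.
rewrite big_split /=.
under [RHS]eq_bigr do rewrite scalerDr scalerA mulrC -scalerA.
rewrite big_split /= -!scaler_sumr.
congr (_ + _ *: _).
  by rewrite [RHS]big_nat_recr //= K0 ?scale0r ?addr0 //; lia.
rewrite [RHS]big_nat_recl // big_nat_recl // Zm0 ZmS Z0 !scaler0 !add0r.
rewrite big_nat_recr //= K0 ?scale0r ?addr0 //; last by lia.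
by apply: eq_bigr => p _; rewrite ZmS.
Qed.

Lemma shiftL N r (X Xm : nat -> A) Y :
 (r.+2 < N)%N -> comm (X 0) Y = 0 -> Xm 0 = 0 -> (forall p, Xm p.+1 = X p) ->
 comm (\sum_(0 <= p < N) (K p r.+1 + bt * Km K p r) *: X p) Y
   = comm (\sum_(0 <= p < N) K p r *: (X p.+1 + bs *: Xm p)) Y.
Proof.
move=> hN X0 Xm0 XmS; rewrite !comm_suml.
rewrite (shift_sum (Z := fun p => comm (X p) Y) (Zm := fun p => comm (Xm p) Y)) //.
- by apply: eq_bigr => p _; rewrite commDl commZl.
- by rewrite Xm0 comm0l.
- by move=> p; rewrite XmS.
Qed.

Lemma shiftR N r (X Xm : nat -> A) Y :
 (r.+2 < N)%N -> comm Y (X 0) = 0 -> Xm 0 = 0 -> (forall p, Xm p.+1 = X p) ->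
 comm Y (\sum_(0 <= p < N) (K p r.+1 + bt * Km K p r) *: X p)
   = comm Y (\sum_(0 <= p < N) K p r *: (X p.+1 + bs *: Xm p)).
Proof.
move=> hN X0 Xm0 XmS; rewrite !comm_sumr.
rewrite (shift_sum (Z := fun p => comm Y (X p)) (Zm := fun p => comm Y (Xm p))) //.
- by apply: eq_bigr => p _; rewrite commDr commZr.
- by rewrite Xm0 comm0r.
- by move=> p; rewrite XmS.
Qed.

Lemma kernel_rel n (T : 'I_n -> 'I_n -> nat -> A) :
  (forall i j z, comm (T i j 0) z = 0) -> (forall i j z, comm z (T i j 0) = 0) ->
  Rel bs T -> Rel bt (fun i j m => \sum_(0 <= p < m.+1) K p m *: T i j p).
Proof.
move=> cL cR HT i j k l r s /=.
set N := (r + s).+3.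
have W : forall a b m, (m < N)%N ->
    \sum_(0 <= p < m.+1) K p m *: T a b p = \sum_(0 <= p < N) K p m *: T a b p.
  move=> a b m hm; rewrite [RHS](@sum_widen _ _ m.+1) // => p hp.
  by rewrite K0 ?scale0r.
have E1 : forall a b m, (m.+2 < N)%N ->
   \sum_(0 <= p < m.+2) K p m.+1 *: T a b p
     + bt *: shm (fun a b m => \sum_(0 <= p < m.+1) K p m *: T a b p) a b m
   = \sum_(0 <= p < N) (K p m.+1 + bt * Km K p m) *: T a b p.
  move=> a b [|m] hm /=.
    rewrite scaler0 addr0 W; last by lia.
    by apply: eq_bigr => p _; rewrite mulr0 addr0.
  rewrite !W; try lia.
  rewrite scaler_sumr -big_split /=; apply: eq_bigr => p _.
  by rewrite scalerDl scalerA.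
rewrite E1; last by rewrite /N; lia.
rewrite E1; last by rewrite /N; lia.
rewrite !W; try (rewrite /N; lia).
rewrite (shiftL (Xm := shm T i j)) //; last by rewrite /N; lia.
rewrite (shiftR (Xm := shm T k l)) //; last by rewrite /N; lia.
rewrite !comm_bil -sumrB !mul_bil [X in _ - X]exchange_big -sumrB.
apply: eq_bigr => p _; rewrite -!sumrB; apply: eq_bigr => q _.
by rewrite -scalerBr HT scalerBr [K q s * _]mulrC.
Qed.

End Ker.

Set Implicit Arguments. Unset Strict Implicit.

Definition cj n (A : algType CC) (P Q : 'M[CC]_n) (T : 'I_n -> 'I_n -> nat -> A) i j m : A :=
  \sum_(a < n) \sum_(b < n) (P i a * Q b j) *: T a b m.

Section Cj.
Variables (A : algType CC) (n : nat).
Implicit Types (x y : 'I_n -> 'I_n -> CC) (X Y : 'I_n -> 'I_n -> A).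

Lemma mul4 x y X Y :
  (\sum_(a < n) \sum_(b < n) x a b *: X a b) * (\sum_(c < n) \sum_(d < n) y c d *: Y c d)
  = \sum_(a < n) \sum_(b < n) \sum_(c < n) \sum_(d < n) (x a b * y c d) *: (X a b * Y c d).
Proof.
rewrite mulr_suml; apply: eq_bigr => a _; rewrite mulr_suml; apply: eq_bigr => b _.
rewrite mulr_sumr; apply: eq_bigr => c _; rewrite mulr_sumr; apply: eq_bigr => d _.
by rewrite -scalerAl -scalerAr scalerA.
Qed.

Lemma swap4 (F : 'I_n -> 'I_n -> 'I_n -> 'I_n -> A) :
  \sum_(c < n) \sum_(b < n) \sum_(a < n) \sum_(d < n) F c b a d
  = \sum_(a < n) \sum_(b < n) \sum_(c < n) \sum_(d < n) F c b a d.
Proof.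
rewrite exchange_big /=; under eq_bigr do rewrite exchange_big /=.
by rewrite exchange_big.
Qed.

Lemma swap22 (F : 'I_n -> 'I_n -> 'I_n -> 'I_n -> A) :
  \sum_(c < n) \sum_(d < n) \sum_(a < n) \sum_(b < n) F a b c d
  = \sum_(a < n) \sum_(b < n) \sum_(c < n) \sum_(d < n) F a b c d.
Proof.
transitivity (\sum_(c < n) \sum_(a < n) \sum_(d < n) \sum_(b < n) F a b c d).
  by apply: eq_bigr => c _; rewrite exchange_big.
rewrite exchange_big; apply: eq_bigr => a _.
transitivity (\sum_(c < n) \sum_(b < n) \sum_(d < n) F a b c d).
  by apply: eq_bigr => c _; rewrite exchange_big.
by rewrite exchange_big.
Qed.

Lemma comm4 x y X Y :
  comm (\sum_(a < n) \sum_(b < n) x a b *: X a b) (\sum_(c < n) \sum_(d < n) y c d *: Y c d)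
  = \sum_(a < n) \sum_(b < n) \sum_(c < n) \sum_(d < n) (x a b * y c d) *: comm (X a b) (Y c d).
Proof.
rewrite /comm !mul4 [X in _ - X]swap22.
rewrite -sumrB; apply: eq_bigr => a _; rewrite -sumrB; apply: eq_bigr => b _.
rewrite -sumrB; apply: eq_bigr => c _; rewrite -sumrB; apply: eq_bigr => d _.
by rewrite scalerBr mulrC.
Qed.

Lemma cj_rel (P Q : 'M[CC]_n) b (T : 'I_n -> 'I_n -> nat -> A) :
  Rel b T -> Rel b (cj P Q T).
Proof.
move=> HT i j k l r s.
have Sh : forall i j m,
   cj P Q T i j m.+1 + b *: shm (cj P Q T) i j m
   = \sum_(a < n) \sum_(c < n) (P i a * Q c j) *: (T a c m.+1 + b *: shm T a c m).
  move=> i' j' [|m] /=.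
    rewrite scaler0 addr0 /cj; apply: eq_bigr => a _; apply: eq_bigr => c _ /=.
    by rewrite addr0.
  rewrite /cj scaler_sumr -big_split; apply: eq_bigr => a _.
  rewrite scaler_sumr -big_split; apply: eq_bigr => c _.
  by rewrite scalerDr !scalerA [b * _]mulrC.
rewrite !Sh /cj !comm4 -sumrB.
rewrite !mul4 [X in _ = X - _]swap4 [X in _ = _ - X]swap4 -sumrB.
apply: eq_bigr => a _; rewrite -!sumrB; apply: eq_bigr => b' _.
rewrite -!sumrB; apply: eq_bigr => c _; rewrite -!sumrB; apply: eq_bigr => d _.
rewrite -!scalerBr HT; congr (_ *: _); ring.
Qed.
End Cj.

Set Implicit Arguments. Unset Strict Implicit.

Definition cK (beta : CC) r k : CC := (-1) ^+ k * ('C(r + k - 1, k))%:R * beta ^+ k.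
Definition Kc (beta : CC) r m : CC :=
  if (r <= m)%N && ~~ odd (m - r) then cK beta r (m - r)./2 else 0.

Lemma Kc_lt beta r m : (m < r)%N -> Kc beta r m = 0.
Proof. by move=> h; rewrite /Kc leqNgt h. Qed.
Lemma Kc_even beta r k : Kc beta r (r + k.*2)%N = cK beta r k.
Proof. by rewrite /Kc leq_addr addKn odd_double doubleK. Qed.
Lemma Kc_odd beta r k : Kc beta r (r + (k.*2).+1)%N = 0.
Proof. by rewrite /Kc leq_addr addKn /= odd_double. Qed.

Lemma decomp r m : (m < r)%N \/ (exists k, m = r + k.*2)%N \/ (exists k, m = r + (k.*2).+1)%N.
Proof.
case: (ltnP m r) => h; first by left.
right; have := odd_double_half (m - r).
case: (odd (m - r)) => /= E.
  by right; exists (m - r)./2; lia.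
by left; exists (m - r)./2; lia.
Qed.

Lemma Kc_sh beta p m : Kc beta p.+1 m.+1 + beta * Km (Kc beta) p.+1 m = Kc beta p m + 0 * Kc beta p.+2 m.
Proof.
rewrite mul0r addr0.
case: (decomp p m) => [h|[[k ->]|[k ->]]].
- rewrite !Kc_lt //; case: m h => [|m] h /=; rewrite ?mulr0 ?addr0 // Kc_lt ?mulr0 ?addr0 //; lia.
- case: k => [|k].
    have -> : ((p + 0.*2).+1 = p.+1 + 0.*2)%N by [].
    rewrite !Kc_even addn0; case: p => [|p] /=; rewrite ?mulr0 ?addr0 /cK //.
    by rewrite Kc_lt ?mulr0 ?addr0 // !addn0 !bin0.
  have -> : (p + k.+1.*2 = (p.+1 + k.*2).+1)%N by lia.
  rewrite /= -addSn.
  have -> : (p.+2 + k.*2 = p + k.+1.*2)%N by lia.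
  rewrite !Kc_even /cK.
  have -> : (p.+1 + k.+1 - 1 = (p + k).+1)%N by lia.
  have -> : (p.+1 + k - 1 = (p + k))%N by lia.
  have -> : (p + k.+1 - 1 = (p + k))%N by lia.
  rewrite binS natrD !exprS; ring.
- rewrite Kc_odd -addSn Kc_odd /= add0r.
  rewrite addnS /=.
  case: k => [|k]; first by rewrite addn0 Kc_lt ?mulr0.
  have -> : (p + k.+1.*2 = p.+1 + (k.*2).+1)%N by lia.
  by rewrite Kc_odd mulr0.
Qed.

Lemma Yexp_ker n beta (A : algType CC) (t : gen_t n -> A) i j m :
  Yexp beta t i j m = \sum_(0 <= r < m.+1) Kc beta r m *: ext t i j r.
Proof.
rewrite /Yexp big_mkord; under eq_bigr do rewrite big_mkcond.
rewrite exchange_big /=; apply: eq_bigr => r _.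
move: (ext t i j r) => X; move: (nat_of_ord r) => {}r.
case: (decomp r m) => [h|[[k E]|[k E]]].
- rewrite Kc_lt // scale0r big1 // => k _; rewrite ifF //; apply/negbTE; lia.
- have hk : (k < m.+1)%N by lia.
  rewrite (bigD1 (Ordinal hk)) //= ifT; last by apply/eqP; lia.
  rewrite big1 ?addr0; first by rewrite E Kc_even.
  move=> k' /negP hk'; rewrite ifF //; apply/negP => /eqP e; apply: hk'.
  by apply/eqP/val_inj => /=; lia.
- rewrite E Kc_odd scale0r big1 // => k' _; rewrite ifF //; apply/negbTE; lia.
Qed.

Definition Kf (f : nat -> CC) p m : CC := if (p <= m)%N then f (m - p)%N else 0.

Lemma Kf_lt f p m : (m < p)%N -> Kf f p m = 0.
Proof. by move=> h; rewrite /Kf leqNgt h. Qed.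

Lemma Kf_sh f b p m : Kf f p.+1 m.+1 + b * Km (Kf f) p.+1 m = Kf f p m + b * Kf f p.+2 m.
Proof. by case: m => [|m] //=; rewrite /Kf ?mulr0 /= ?subSS. Qed.

Lemma fmul_ker n (A : algType CC) (t : gen_t n -> A) f i j m :
  fmul t f i j m = \sum_(0 <= p < m.+1) Kf f p m *: ext t i j p.
Proof.
rewrite big_nat_rev /= /fmul big_mkord; apply: eq_bigr => p _.
have hp := ltn_ord p.
rewrite /Kf add0n subSS leq_subr subKn //.
Qed.

Definition conv (f g : nat -> CC) d := \sum_(0 <= c < d.+1) f c * g (d - c)%N.

Lemma conv_sym f g d : conv f g d = conv g f d.
Proof.
rewrite /conv big_nat_rev /=; apply: eq_big_nat => c /andP[_ hc].
by rewrite add0n subSS subKn // mulrC.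
Qed.

Lemma Kf_comp f g p M :
  \sum_(0 <= q < M.+1) Kf g q M * Kf f p q = if (p <= M)%N then conv f g (M - p)%N else 0.
Proof.
case: (leqP p M) => h; last first.
  by rewrite big1_seq // => q /andP[_]; rewrite mem_index_iota => hq; rewrite [Kf f p q]Kf_lt ?mulr0 //; lia.
rewrite (big_cat_nat (n := p)) //=; last by lia.
rewrite big1_seq ?add0r; last first.
  by move=> q /andP[_]; rewrite mem_index_iota => hq; rewrite [Kf f p q]Kf_lt ?mulr0 //; lia.
rewrite -{1}(add0n p) big_addn /conv.
have -> : (M.+1 - p = (M - p).+1)%N by lia.
apply: eq_big_nat => c hc; rewrite /Kf.
rewrite ifT; last by lia.
rewrite ifT; last by lia.
rewrite addnK mulrC; congr (_ * g _); lia.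
Qed.

Fixpoint ginv (f : nat -> CC) (fuel m : nat) : CC :=
  match fuel with
  | 0 => 1
  | fuel'.+1 => if m is m'.+1 then - \sum_(0 <= k < m) f k.+1 * ginv f fuel' (m' - k) else 1
  end.

Lemma ginv_fuel f fuel1 fuel2 m : (m <= fuel1)%N -> (m <= fuel2)%N -> ginv f fuel1 m = ginv f fuel2 m.
Proof.
elim: fuel1 fuel2 m => [|f1 IH] [|f2] [|m] //= h1 h2.
congr (- _); apply: eq_big_nat => k hk; congr (_ * _); apply: IH; lia.
Qed.

Definition ginvf f m := ginv f m m.

Lemma conv_ginv f : f 0%N = 1 -> forall d, conv f (ginvf f) d = (d == 0%N)%:R.
Proof.
move=> f0 [|d]; first by rewrite /conv big_nat1 f0 /ginvf /= mulr1.
rewrite /conv big_nat_recl // f0 mul1r subn0 /ginvf /=.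
rewrite addrC; apply/eqP; rewrite subr_eq0; apply/eqP; apply: eq_big_nat => k hk.
rewrite subSS; congr (_ * _); apply: ginv_fuel; lia.
Qed.

Set Implicit Arguments. Unset Strict Implicit.

Lemma Rel_ext n b (A : algType CC) (T1 T2 : 'I_n -> 'I_n -> nat -> A) :
  (forall i j m, T1 i j m = T2 i j m) -> Rel b T2 -> Rel b T1.
Proof.
move=> h; have -> // : T1 = T2.
by do 3 (apply: functional_extensionality => ?); apply: h.
Qed.

Lemma ext_central n (A : algType CC) (t : gen_t n -> A) :
  (forall i j z, comm (ext t i j 0) z = 0) /\ (forall i j z, comm z (ext t i j 0) = 0).
Proof. by split=> i j z; rewrite /= ?comm_natl ?comm_natr. Qed.

Lemma Kc00 beta : Kc beta 0 0 = 1.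
Proof. by rewrite /Kc /= /cK /= !expr0 !mul1r. Qed.

Lemma Kc0S beta m : Kc beta 0 m.+1 = 0.
Proof.
case: (decomp 0 m.+1) => [//|[[k E]|[k E]]]; rewrite E ?Kc_odd //.
rewrite Kc_even /cK; case: k E => [//|k] _.
by rewrite bin_small ?mulr0 ?mul0r //; lia.
Qed.

Lemma Kc1 beta m : Kc beta 1 m.+1 = inv_coef beta m.+1.
Proof.
case: (decomp 1 m.+1) => [//|[[k E]|[k E]]]; rewrite E ?Kc_odd /inv_coef.
  rewrite Kc_even /cK add1n /= odd_double /= add0n uphalf_double.
  have -> : (k.+1 - 1 = k)%N by lia.
  by rewrite binn mulr1 -exprMn mulN1r.
by rewrite add1n /= odd_double.
Qed.

Lemma cj_delta n (A : algType CC) (P Q : 'M[CC]_n) (T : 'I_n -> 'I_n -> nat -> A) i j m :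
  (forall a b, T a b m = (a == b)%:R) ->
  P *m Q = 1%:M -> cj P Q T i j m = (i == j)%:R.
Proof.
move=> hT PQ; rewrite /cj.
transitivity (\sum_(a < n) (P i a * Q a j) *: (1 : A)).
  apply: eq_bigr => a _; rewrite (bigD1 a) //= hT eqxx [X in _ + X]big1 ?addr0 // => b hb.
  by rewrite hT eq_sym (negbTE hb) scaler0.
rewrite -scaler_suml.
have -> : \sum_(a < n) P i a * Q a j = (P *m Q) i j by rewrite mxE.
by rewrite PQ mxE scaler_nat.
Qed.

Lemma cj_id n (A : algType CC) (T : 'I_n -> 'I_n -> nat -> A) i j m :
  cj 1%:M 1%:M T i j m = T i j m.
Proof.
rewrite /cj (bigD1 i) //= [X in _ + X]big1 ?addr0; last first.
  move=> a ha; apply: big1 => b _; rewrite !mxE eq_sym (negbTE ha) /=.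
  by rewrite mul0r scale0r.
rewrite (bigD1 j) //= [X in _ + X]big1 ?addr0; last first.
  by move=> b hb; rewrite !mxE (negbTE hb) mulr0 scale0r.
by rewrite !mxE !eqxx mulr1 scale1r.
Qed.

Lemma cj_comp n (A : algType CC) (P Q P' Q' : 'M[CC]_n) (T : 'I_n -> 'I_n -> nat -> A) i j m :
  cj P Q (cj P' Q' T) i j m = cj (P *m P') (Q' *m Q) T i j m.
Proof.
rewrite /cj.
transitivity (\sum_(a < n) \sum_(b < n) \sum_(c < n) \sum_(d < n)
     ((P i a * Q b j) * (P' a c * Q' d b)) *: T c d m).
  apply: eq_bigr => a _; apply: eq_bigr => b _.
  rewrite scaler_sumr; apply: eq_bigr => c _.
  rewrite scaler_sumr; apply: eq_bigr => d _.
  by rewrite scalerA.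
rewrite -swap22; apply: eq_bigr => c _; apply: eq_bigr => d _.
rewrite !mxE mulr_suml scaler_suml; apply: eq_bigr => a _.
rewrite mulr_sumr scaler_suml; apply: eq_bigr => b _.
by congr (_ *: _); ring.
Qed.

Unset Implicit Arguments. Set Strict Implicit.

Theorem mainTheorem7 (n : nat) (hn : (0 < n)%N) (beta : CC) (hbeta : beta != 0)
  (OY : algType CC) (tOY : gen_t n -> OY) (HOY : is_OY beta tOY)
  (U : algType CC) (E : 'I_n * 'I_n -> U) (HU : is_Ugl E)
  (Y : algType CC) (ty : gen_t n -> Y) (HY : is_Yangian ty) :
  (* (i) evaluation homomorphism OY -> U(gl_n), surjective *)
  (exists phi : {lrmorphism OY -> U},
      (forall (i j : 'I_n) (r : nat),
          phi (tOY (i, j, r)) = inv_coef beta r.+1 *: E (i, j))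
      /\ (forall y : U, exists x : OY, phi x = y))
  (* (i) embedding U(gl_n) -> OY, E_ij |-> t~^{(1)}_ij *)
  /\ (exists psi : {lrmorphism U -> OY},
      (forall i j : 'I_n, psi (E (i, j)) = tOY (i, j, 0%N))
      /\ injective psi)
  (* (ii) homomorphism OY -> Y, T~(u) |-> T(u + beta/u) *)
  /\ (exists chi : {lrmorphism OY -> Y},
      forall (i j : 'I_n) (r : nat), chi (tOY (i, j, r)) = Yexp beta ty i j r.+1)
  (* (iii)(a) T~(u) |-> f(u) T~(u) is an automorphism *)
  /\ (forall f : nat -> CC, f 0%N = 1 ->
      exists alpha : {lrmorphism OY -> OY},
        (forall (i j : 'I_n) (r : nat), alpha (tOY (i, j, r)) = fmul tOY f i j r.+1)
        /\ bijective alpha)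
  (* (iii)(b) T~(u) |-> B T~(u) B^{-1} is an automorphism *)
  /\ (forall B : 'M[CC]_n, B \in unitmx ->
      exists alpha : {lrmorphism OY -> OY},
        (forall (i j : 'I_n) (r : nat), alpha (tOY (i, j, r)) = conjT tOY B i j r.+1)
        /\ bijective alpha).
Proof.
case: HOY => HOY1 UOY; case: HU => HU1 UU; case: HY => HY1 UY.
have uniqOY : forall a : {lrmorphism OY -> OY}, (forall x, a (tOY x) = tOY x) -> forall y, a y = y.
  move=> a ha y.
  have [F0 [_ uF]] := UOY OY tOY HOY1.
  have e1 := uF a ha; have e2 := uF idfun (fun x => erefl).
  by rewrite e1 -e2.
have Urel : U_rel (fun x : 'I_n * 'I_n => tOY (x.1, x.2, 0%N)).
  move=> i j k l /=.
  have := HOY1 i j k l 1%N 0%N; rewrite /= comm_natr scaler0 addr0 sub0r => H.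
  by rewrite -[LHS]opprK H opprB !mulr_natl !mulr_natr.

have [psi [psiE _]] := UU OY _ Urel.
pose s := fun x : gen_t n => let '(i, j, r) := x in if r is 0%N then E (i, j) else 0.
have Rs : Rel 0 (ext s).
  move=> i j k l r r'; rewrite !scale0r !addr0.
  case: r => [|[|r]]; case: r' => [|[|r']] /=;
    rewrite ?comm_natl ?comm_natr ?comm0l ?comm0r ?mul0r ?mulr0 ?subrr ?sub0r ?subr0 //.
  - by rewrite HU1 !mulr_natl !mulr_natr.
  - by rewrite HU1 opprB !mulr_natl !mulr_natr.
pose hphi := fun x : gen_t n => let '(i, j, r) := x in inv_coef beta r.+1 *: E (i, j).
have Rphi : OY_rel beta hphi.
  apply/OY_Rel; have [c1 c2] := ext_central s.
  apply: (Rel_ext _ (kernel_rel (@Kc_lt beta) (@Kc_sh beta) c1 c2 Rs)).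
  move=> i j [|m] /=.
    by rewrite big_nat1 Kc00 scale1r.
  rewrite big_nat_recl // big_nat_recl // Kc0S scale0r add0r /= Kc1.
  by rewrite big1 ?addr0 // => p _; rewrite scaler0.
have [phi [phiE _]] := UOY U hphi Rphi.
have phipsi : forall y, phi (psi y) = y.
  move=> y; have [F0 [_ uF]] := UU U E HU1.
  have e1 : forall x, (phi \o psi) (E x) = E x.
    have h1 : inv_coef beta 1%N = 1 by [].
    by case=> i j /=; rewrite psiE phiE /hphi /= h1 scale1r.
  have e2 := uF idfun (fun x => erefl).
  by transitivity (F0 y); [exact: (uF _ e1 y) | rewrite -e2].
split.
  exists phi; split; first by move=> i j r; rewrite phiE.
  by move=> y; exists (psi y); rewrite phipsi.
split.
  exists psi; split; first by move=> i j; rewrite psiE.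
  exact: (can_inj phipsi).
have RY : Rel 0 (ext ty).
  by move=> i j k l r r'; rewrite !scale0r !addr0; apply: HY1.
pose hchi := fun x : gen_t n => let '(i, j, r) := x in Yexp beta ty i j r.+1.
have Rchi : OY_rel beta hchi.
  apply/OY_Rel; have [c1 c2] := ext_central ty.
  apply: (Rel_ext _ (kernel_rel (@Kc_lt beta) (@Kc_sh beta) c1 c2 RY)).
  move=> i j [|m] /=; first by rewrite big_nat1 Kc00 scale1r.
  by rewrite Yexp_ker.
have [chi [chiE _]] := UOY Y hchi Rchi.
split; first by exists chi => i j r; rewrite chiE.
have HOYR : Rel beta (ext tOY) by apply/OY_Rel.
have mkf : forall f : nat -> CC, f 0%N = 1 -> exists a : {lrmorphism OY -> OY},
    forall x, a (tOY x) = (let '(i, j, r) := x in fmul tOY f i j r.+1).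
  move=> f f0.
  have Rf : OY_rel beta (fun x : gen_t n => let '(i, j, r) := x in fmul tOY f i j r.+1).
    apply/OY_Rel; have [c1 c2] := ext_central tOY.
    apply: (Rel_ext _ (kernel_rel (@Kf_lt f) (@Kf_sh f beta) c1 c2 HOYR)).
    move=> i j [|m] /=; first by rewrite big_nat1 /Kf /= f0 scale1r.
    by rewrite fmul_ker.
  by have [a [aE _]] := UOY OY _ Rf; exists a.
have aext : forall f (a : {lrmorphism OY -> OY}), f 0%N = 1 ->
    (forall x, a (tOY x) = (let '(i, j, r) := x in fmul tOY f i j r.+1)) ->
    forall i j m, a (ext tOY i j m) = \sum_(0 <= p < m.+1) Kf f p m *: ext tOY i j p.
  move=> f a f0 ha i j [|m] /=.
    by rewrite rmorph_nat big_nat1 /Kf /= f0 scale1r.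
  by rewrite (ha (i, j, m)) fmul_ker.
have compf : forall f g (af ag : {lrmorphism OY -> OY}), f 0%N = 1 -> g 0%N = 1 ->
    (forall d, conv f g d = (d == 0%N)%:R) ->
    (forall x, af (tOY x) = (let '(i, j, r) := x in fmul tOY f i j r.+1)) ->
    (forall x, ag (tOY x) = (let '(i, j, r) := x in fmul tOY g i j r.+1)) ->
    forall y, af (ag y) = y.
  move=> f g af ag f0 g0 fg haf hag.
  apply: (uniqOY (af \o ag)) => -[[i j] r] /=.
  rewrite (hag (i, j, r)) fmul_ker raddf_sum.
  set M := r.+1.
  transitivity (\sum_(0 <= q < M.+1) \sum_(0 <= p < M.+1) (Kf g q M * Kf f p q) *: ext tOY i j p).
    apply: eq_big_nat => q hq; etransitivity; first exact: linearZZ.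
    have e := aext f af f0 haf i j q.
    etransitivity; first exact: (congr1 (fun z => Kf g q M *: z) e).
    rewrite [RHS](@sum_widen _ _ q.+1); last 2 first.
    - by case/andP: hq.
    - by move=> p hp; rewrite [Kf f p q]Kf_lt ?mulr0 ?scale0r.
    by rewrite scaler_sumr; apply: eq_bigr => p _; rewrite scalerA.
  rewrite exchange_big /=.
  under eq_bigr do rewrite -scaler_suml Kf_comp.
  rewrite big_nat_recr //= leqnn subnn fg eqxx scale1r big1_seq ?add0r //.
  move=> p /andP[_]; rewrite mem_index_iota => hp.
  rewrite ifT; last by lia.
  rewrite fg (_ : (M - p == 0)%N = false) ?scale0r //; apply/negbTE; lia.
split.
  move=> f f0; have [af haf] := mkf f f0.
  pose g := ginvf f; have g0 : g 0%N = 1 by [].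
  have [ag hag] := mkf g g0.
  exists af; split; first by move=> i j r; exact: (haf (i, j, r)).
  exists ag.
    apply: (compf g f ag af g0 f0) => // d.
    by rewrite conv_sym conv_ginv.
  exact: (compf f g af ag f0 g0 (conv_ginv f0)).
have mkB : forall B : 'M[CC]_n, B \in unitmx -> exists a : {lrmorphism OY -> OY},
    forall x, a (tOY x) = (let '(i, j, r) := x in conjT tOY B i j r.+1).
  move=> B uB.
  have RB : OY_rel beta (fun x : gen_t n => let '(i, j, r) := x in conjT tOY B i j r.+1).
    apply/OY_Rel; apply: (Rel_ext _ (cj_rel B (invmx B) HOYR)).
    move=> i j [|m] /=; last by [].
    by rewrite cj_delta // mulmxV.
  by have [a [aE _]] := UOY OY _ RB; exists a.
have compB : forall (B B' : 'M[CC]_n) (a a' : {lrmorphism OY -> OY}),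
    B' *m B = 1%:M -> invmx B *m invmx B' = 1%:M ->
    (forall x, a (tOY x) = (let '(i, j, r) := x in conjT tOY B i j r.+1)) ->
    (forall x, a' (tOY x) = (let '(i, j, r) := x in conjT tOY B' i j r.+1)) ->
    forall y, a (a' y) = y.
  move=> B B' a a' h1 h2 ha ha'.
  apply: (uniqOY (a \o a')) => -[[i j] r] /=.
  rewrite (ha' (i, j, r)).
  transitivity (cj B' (invmx B') (cj B (invmx B) (ext tOY)) i j r.+1).
    rewrite /conjT /cj raddf_sum; apply: eq_bigr => c _.
    rewrite raddf_sum; apply: eq_bigr => d _.
    etransitivity; first exact: linearZZ.
    by congr (_ *: _); exact: (ha (c, d, r)).
  by rewrite cj_comp h1 h2 cj_id.
move=> B uB; have [a ha] := mkB B uB.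
have uB' : invmx B \in unitmx by rewrite unitmx_inv.
have [a' ha'] := mkB _ uB'.
exists a; split; first by move=> i j r; exact: (ha (i, j, r)).
exists a'.
  apply: (compB _ B) => //; first by rewrite mulmxV.
  by rewrite invmxK mulmxV.
apply: (compB B) => //; first by rewrite mulVmx.
by rewrite invmxK mulVmx.
Qed.
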